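(* Let $k$ be a commutative ring and $A$ a commutative $k$-algebra with $\mathbb Q\subset A$ such that $\operatorname{Der}_k(A)$ is a projective $A$-module of finite rank. Then the canonical homomorphism of graded $A$-algebras $\tau_{A/k}:\operatorname{Sym}\operatorname{Der}_k(A)\to\operatorname{gr}\operatorname{Diff}_{A/k}$ is an isomorphism.
   Context: $\operatorname{Diff}_{A/k}$ is the ring of $k$-linear differential operators of $A$ (order $0$ = multiplications by elements of $A$; $\varphi$ has order $\le i+1$ iff $\varphi\circ a-a\circ\varphi$ has order $\le i$ for all $a$), filtered by order; $\operatorname{gr}\operatorname{Diff}_{A/k}$ is the associated graded ring, which is commutative. $\tau_{A/k}$ is the graded $A$-algebra homomorphism induced by the $A$-linear isomorphism $\operatorname{Der}_k(A)\to\operatorname{gr}^1\operatorname{Diff}_{A/k}$, $\delta\mapsto\sigma_1(\delta)$ (class of $\delta$ modulo order $0$ operators). *)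

(* Defs.v *)
From HB Require Import structures.
From Stdlib Require List Relation_Operators.
From mathcomp Require Import all_boot all_order all_algebra.
Set Implicit Arguments. Unset Strict Implicit. Unset Printing Implicit Defensive.
Import GRing.Theory.
Local Open Scope ring_scope.

Section DiffOps.
Variables (k : comNzRingType) (A : comAlgType k).

Definition klinear (f : A -> A) : Prop :=
  (forall x y, f (x + y) = f x + f y) /\ (forall (c : k) x, f (c *: x) = c *: f x).

Definition isDer (d : A -> A) : Prop :=
  klinear d /\ (forall x y, d (x * y) = x * d y + y * d x).

Definition commut (phi : A -> A) (a : A) : A -> A := fun x => phi (a * x) - a * phi x.

Fixpoint diffop (i : nat) (phi : A -> A) : Prop :=
  match i with
  | 0 => exists a : A, forall x, phi x = a * x
  | i'.+1 => klinear phi /\ forall a : A, diffop i' (commut phi a)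
  end.

(* "order <= i - 1", with order <= -1 meaning the zero operator;
   the submodule one quotients by to get gr^i Diff *)
Definition ord_lt (i : nat) (phi : A -> A) : Prop :=
  match i with
  | 0 => forall x, phi x = 0
  | i'.+1 => diffop i' phi
  end.

Definition contains_Q : Prop := forall n : nat, exists b : A, b * (n.+1)%:R = 1.

(* Der_k(A) is a finitely generated projective A-module (dual basis lemma form) *)
Definition Der_fg_projective : Prop :=
  exists (n : nat) (ds : 'I_n -> A -> A) (phis : 'I_n -> (A -> A) -> A),
    [/\ forall j, isDer (ds j),
        forall j d e, isDer d -> isDer e -> (forall x, d x = e x) -> phis j d = phis j e,
        forall j (a : A) d e, isDer d -> isDer e ->
          phis j (fun x => a * d x + e x) = a * phis j d + phis j e &
        forall d, isDer d -> forall x, d x = \sum_(j < n) phis j d * ds j x].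

(* A term (a, [d1; ...; di]) stands for a * d1 d2 ... di ; a formal sum is a list. *)
Definition term := (A * seq (A -> A))%type.

Definition wf_term (i : nat) (t : term) : Prop :=
  size t.2 = i /\ forall d, List.In d t.2 -> isDer d.
Definition wf_sum (i : nat) (s : seq term) : Prop := forall t, List.In t s -> wf_term i t.

Inductive sym_basic : seq term -> seq term -> Prop :=
  | sb_swap t1 t2 : sym_basic [:: t1; t2] [:: t2; t1]
  | sb_merge a b w : sym_basic [:: (a, w); (b, w)] [:: (a + b, w)]
  | sb_zero w : sym_basic [:: (0, w)] [::]
  | sb_ext a u v d d' : (forall x, d x = d' x) ->
      sym_basic [:: (a, u ++ d :: v)] [:: (a, u ++ d' :: v)]
  | sb_add a u v d1 d2 :
      sym_basic [:: (a, u ++ (fun x => d1 x + d2 x) :: v)]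
                [:: (a, u ++ d1 :: v); (a, u ++ d2 :: v)]
  | sb_scale a b u v d :
      sym_basic [:: (a, u ++ (fun x => b * d x) :: v)] [:: (a * b, u ++ d :: v)]
  | sb_sym a u v d1 d2 :
      sym_basic [:: (a, u ++ d1 :: d2 :: v)] [:: (a, u ++ d2 :: d1 :: v)].

Definition sym_step (i : nat) (s t : seq term) : Prop :=
  exists p q r r', [/\ s = p ++ r ++ q, t = p ++ r' ++ q,
                       wf_sum i r, wf_sum i r' & sym_basic r r'].

Definition sym_eq (i : nat) : seq term -> seq term -> Prop :=
  Relation_Operators.clos_refl_sym_trans _ (sym_step i).

Definition word_op (w : seq (A -> A)) : A -> A := foldr (fun d f => d \o f) id w.
Definition tau (s : seq term) : A -> A := fun x => \sum_(t <- s) t.1 * word_op t.2 x.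

End DiffOps.

(* Main.v *)
Require Import Defs.
From HB Require Import structures.
From mathcomp Require Import all_boot all_order all_algebra.
From mathcomp Require Import ring zify.
From Stdlib Require Import FunctionalExtensionality ClassicalEpsilon Relation_Operators.
Import GRing.Theory.
Local Open Scope ring_scope.
Set Implicit Arguments. Unset Strict Implicit.

Section Ops.
Variables (k : comNzRingType) (A : comAlgType k).
Notation op := (A -> A).

Lemma klin_mul (c : A) : klinear (fun x : A => c * x).
Proof. split=> [x y|a x]; [by rewrite mulrDr | by rewrite scalerAr]. Qed.

Lemma diffop_klin n (f : op) : diffop n f -> klinear f.
Proof.
case: n => [[c Hc]|n [H _]] //.
have -> : f = (fun x => c * x) by apply: functional_extensionality.
exact: klin_mul.
Qed.

Lemma klin_add0 (f : op) : klinear f -> f 0 = 0.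
Proof. move=> [H _]; have h := H 0 0; rewrite addr0 in h.
have : f 0 - f 0 = f 0 + f 0 - f 0 by rewrite -h.
by rewrite subrr addrK. Qed.

Lemma klin_sub (f : A -> A) x y : klinear f -> f (x - y) = f x - f y.
Proof.
move=> [H _]; have h := H (x - y) y; rewrite subrK in h.
by rewrite h addrK.
Qed.

Lemma diffop_zero n : diffop n (fun _ : A => 0 : A).
Proof.
elim: n => [|n IH]; first by exists 0 => x; rewrite mul0r.
split; first by split=> *; rewrite ?addr0 ?scaler0.
move=> a; have -> : commut (fun _ : A => 0) a = (fun _ => 0).
  by apply: functional_extensionality => x; rewrite /commut mulr0 subr0.
done.
Qed.

Lemma diffop_mulc n (c : A) (f : op) : diffop n f -> diffop n (fun x => c * f x).
Proof.
elim: n c f => [|n IH] c f.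
  by move=> [a Ha]; exists (c * a) => x; rewrite Ha mulrA.
move=> [[H1 H2] H]; split.
  by split=> *; rewrite ?H1 ?H2 ?mulrDr // scalerAr.
move=> a; have -> : commut (fun x => c * f x) a = (fun x => c * commut f a x).
  apply: functional_extensionality => x; rewrite /commut; ring.
exact: IH (H a).
Qed.

Lemma diffop_add n (f g : op) : diffop n f -> diffop n g -> diffop n (fun x => f x + g x).
Proof.
elim: n f g => [|n IH] f g.
  by move=> [a Ha] [b Hb]; exists (a + b) => x; rewrite Ha Hb mulrDl.
move=> [[H1 H2] H] [[G1 G2] G]; split.
  split=> *; rewrite ?H1 ?H2 ?G1 ?G2; [ring | by rewrite scalerDr].
move=> a; have -> : commut (fun x => f x + g x) a = (fun x => commut f a x + commut g a x).
  apply: functional_extensionality => x; rewrite /commut; ring.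
exact: IH (H a) (G a).
Qed.

Lemma diffop_sub n (f g : op) : diffop n f -> diffop n g -> diffop n (fun x => f x - g x).
Proof.
move=> Hf Hg; have := diffop_add Hf (diffop_mulc (-1) Hg).
have -> : (fun x => f x + -1 * g x) = (fun x => f x - g x).
  by apply: functional_extensionality => x; rewrite mulN1r.
done.
Qed.

Lemma diffopS n (f : op) : diffop n f -> diffop n.+1 f.
Proof.
elim: n f => [|n IH] f.
  move=> [c Hc]; split; first by apply: (@diffop_klin 0); exists c.
  move=> a; exists 0 => x; rewrite /commut !Hc; ring.
by move=> [Hl H]; split=> // a; apply: IH (H a).
Qed.

Lemma diffop_precomp n (f : op) (c : A) : diffop n f -> diffop n (fun x => f (c * x)).
Proof.
elim: n f => [|n IH] f.
  by move=> [a Ha]; exists (a * c) => x; rewrite Ha mulrA.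
move=> [[H1 H2] H]; split.
  by split=> *; rewrite ?mulrDr ?H1 // -H2 scalerAr.
move=> a; have -> : commut (fun x => f (c * x)) a = (fun x => commut f a (c * x)).
  by apply: functional_extensionality => x; rewrite /commut mulrCA.
exact: IH (H a).
Qed.

Lemma commut_comp (f g : op) a :
  klinear f ->
  commut (f \o g) a = (fun x => f (commut g a x) + commut f a (g x)).
Proof.
move=> Hf; apply: functional_extensionality => x; rewrite /commut /= (klin_sub _ _ Hf).
ring.
Qed.

Lemma diffop_comp m n (f g : op) : diffop m f -> diffop n g -> diffop (m + n) (f \o g).
Proof.
elim: m n f g => [|m IHm] n f g.
  move=> [c Hc] Hg; rewrite add0n.
  have -> : f \o g = (fun x => c * g x) by apply: functional_extensionality => x; rewrite /= Hc.
  exact: diffop_mulc.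
elim: n f g => [|n IHn] f g.
  move=> Hf [c Hc]; rewrite addn0.
  have -> : f \o g = (fun x => f (c * x)) by apply: functional_extensionality => x; rewrite /= Hc.
  exact: diffop_precomp.
move=> Hf Hg; have Kf := diffop_klin Hf; have Kg := diffop_klin Hg.
split.
  case: Kf Kg => [F1 F2] [G1 G2]; split=> *; by rewrite /= ?G1 ?F1 ?G2 ?F2.
move=> a; rewrite commut_comp //.
rewrite -addSnnS; apply: diffop_add.
  have := IHn f (commut g a) Hf (Hg.2 a); rewrite addSn.
  by have -> : f \o commut g a = (fun x => f (commut g a x)).
rewrite addSn -addnS.
by have := IHm n.+1 (commut f a) g (Hf.2 a) Hg.
Qed.

Lemma isDer_diffop (e : op) : isDer e -> diffop 1 e.
Proof.
move=> [Hl Hd]; split=> // a; exists (e a) => x.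
by rewrite /commut Hd; ring.
Qed.

Lemma diffop_id : diffop 0 (fun x : A => x).
Proof. by exists 1 => x; rewrite mul1r. Qed.

Definition allDer (w : seq op) := forall d, List.In d w -> isDer d.

Lemma word_diffop (w : seq op) : allDer w -> diffop (size w) (word_op w).
Proof.
elim: w => [|d w IH] H /=.
  by have := diffop_id; rewrite /word_op /=.
have := diffop_comp (isDer_diffop (H d (or_introl erefl))) (IH (fun e He => H e (or_intror He))).
by rewrite add1n.
Qed.


Lemma ord_lt_commut m (f : op) a : ord_lt m.+1 f -> ord_lt m (commut f a).
Proof.
case: m => [[c Hc]|m [_ H]] /=; last exact: H.
by move=> x; rewrite /commut !Hc; ring.
Qed.

Definition comm_seq (f : op) (l : seq A) : op := foldl (fun g a => commut g a) f l.

Lemma comm_seq_ord m (R : op) (l : seq A) : ord_lt m R -> size l = m -> forall x, comm_seq R l x = 0.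
Proof.
elim: l m R => [|a l IH] m R HR Hs; subst m; first exact: HR.
exact: (IH (size l) _ (ord_lt_commut a HR) erefl).
Qed.

Lemma comm_seq_add (f g : op) l :
  comm_seq (fun x => f x + g x) l = (fun x => comm_seq f l x + comm_seq g l x).
Proof.
elim: l f g => [|a l IH] f g /=; first by [].
have -> : commut (fun x => f x + g x) a = (fun x => commut f a x + commut g a x).
  by apply: functional_extensionality => x; rewrite /commut; ring.
exact: IH.
Qed.

Lemma comm_seq_mulc (c : A) (f : op) l :
  comm_seq (fun x => c * f x) l = (fun x => c * comm_seq f l x).
Proof.
elim: l f => [|a l IH] f /=; first by [].
have -> : commut (fun x => c * f x) a = (fun x => c * commut f a x).
  by apply: functional_extensionality => x; rewrite /commut; ring.
exact: IH.
Qed.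

Lemma comm_seq_sub (f g : op) l :
  comm_seq (fun x => f x - g x) l = (fun x => comm_seq f l x - comm_seq g l x).
Proof.
have -> : (fun x => f x - g x) = (fun x => f x + (-1) * g x).
  by apply: functional_extensionality => x; rewrite mulN1r.
rewrite comm_seq_add comm_seq_mulc; apply: functional_extensionality => x; by rewrite mulN1r.
Qed.

Lemma comm_seq_zero l : comm_seq (fun _ : A => 0 : A) l = (fun _ => 0).
Proof.
have := comm_seq_mulc 0 (fun x => x) l.
have -> : (fun x : A => 0 * x) = (fun _ => 0) by apply: functional_extensionality => x; rewrite mul0r.
move=> ->; apply: functional_extensionality => x; by rewrite mul0r.
Qed.

Lemma comm_seq_sum (I : Type) (r : seq I) (F : I -> op) l :
  comm_seq (fun x => \sum_(i <- r) F i x) l = (fun x => \sum_(i <- r) comm_seq (F i) l x).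
Proof.
elim: r => [|i r IH].
  have -> : (fun x : A => \sum_(i <- [::]) F i x) = (fun _ => 0).
    by apply: functional_extensionality => x; rewrite big_nil.
  by rewrite comm_seq_zero; apply: functional_extensionality => x; rewrite big_nil.
have -> : (fun x : A => \sum_(j <- i :: r) F j x) = (fun x => F i x + \sum_(j <- r) F j x).
  by apply: functional_extensionality => x; rewrite big_cons.
rewrite comm_seq_add IH; apply: functional_extensionality => x; by rewrite big_cons.
Qed.

Lemma comm_seq_cons f a l : comm_seq f (a :: l) = comm_seq (commut f a) l.
Proof. by []. Qed.

Lemma ord_lt_add m (f g : op) : ord_lt m f -> ord_lt m g -> ord_lt m (fun x => f x + g x).
Proof. case: m => [Hf Hg x|m]; [by rewrite Hf Hg addr0 | exact: diffop_add]. Qed.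

Lemma ord_lt_mulc m c (f : op) : ord_lt m f -> ord_lt m (fun x => c * f x).
Proof. case: m => [Hf x|m]; [by rewrite Hf mulr0 | exact: diffop_mulc]. Qed.

Lemma ord_lt_zero m : ord_lt m (fun _ : A => 0 : A).
Proof. case: m => [//|m]; exact: diffop_zero. Qed.

Lemma ord_lt_sum m (I : Type) (r : seq I) (F : I -> op) :
  (forall i, ord_lt m (F i)) -> ord_lt m (fun x => \sum_(i <- r) F i x).
Proof.
move=> H; elim: r => [|i r IH].
  have -> : (fun x : A => \sum_(i <- [::]) F i x) = (fun _ => 0).
    by apply: functional_extensionality => x; rewrite big_nil.
  exact: ord_lt_zero.
have -> : (fun x : A => \sum_(j <- i :: r) F j x) = (fun x => F i x + \sum_(j <- r) F j x).
  by apply: functional_extensionality => x; rewrite big_cons.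
exact: ord_lt_add.
Qed.

Lemma ord_lt_sum_in m (I : Type) (r : seq I) (F : I -> op) :
  (forall i, List.In i r -> ord_lt m (F i)) -> ord_lt m (fun x => \sum_(i <- r) F i x).
Proof.
elim: r => [|i r IH] H.
  have -> : (fun x : A => \sum_(i <- [::]) F i x) = (fun _ => 0).
    by apply: functional_extensionality => x; rewrite big_nil.
  exact: ord_lt_zero.
have -> : (fun x : A => \sum_(j <- i :: r) F j x) = (fun x => F i x + \sum_(j <- r) F j x).
  by apply: functional_extensionality => x; rewrite big_cons.
apply: ord_lt_add; first by apply: H; left.
by apply: IH => j Hj; apply: H; right.
Qed.

Lemma In_iota i m n : List.In i (iota m n) -> (i < m + n)%N.
Proof.
elim: n m => [|n IH] m //= [<-|H]; first lia.
by have := IH _ H; rewrite addSnnS.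
Qed.

Lemma ord_lt_comp_der m (e R : op) : isDer e -> ord_lt m R -> ord_lt m.+1 (fun x => e (R x)).
Proof.
move=> He; case: m => [HR|m HR] /=.
  exists 0 => x; rewrite HR mul0r; exact: (klin_add0 He.1).
exact: (diffop_comp (isDer_diffop He) HR).
Qed.

Lemma drop_ord m (chi : op) : diffop m chi ->
  (forall l, size l = m -> forall x, comm_seq chi l x = 0) -> ord_lt m chi.
Proof.
elim: m chi => [|m IH] chi Hd H.
  by move=> x; apply: (H [::]).
case: m IH Hd H => [|m] IH Hd H /=.
  exists (chi 1) => x.
  have := H [:: x] erefl 1; rewrite /= /commut mulr1 => /eqP; rewrite subr_eq0 => /eqP ->.
  by rewrite mulrC.
split; first exact: (diffop_klin Hd).
move=> a; apply: (IH (commut chi a) (Hd.2 a)) => l Hl x.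
by apply: (H (a :: l)); rewrite /= Hl.
Qed.


Definition drop_nth (T : Type) (i : nat) (s : seq T) := take i s ++ drop i.+1 s.

Lemma size_drop_nth (T : Type) i (s : seq T) : (i < size s)%N -> size (drop_nth i s) = (size s).-1.
Proof. move=> H; rewrite /drop_nth size_cat size_take size_drop H; lia. Qed.

Lemma drop_nth_cons0 (T : Type) (x : T) s : drop_nth 0 (x :: s) = s.
Proof. by rewrite /drop_nth /= drop0. Qed.

Lemma drop_nth_consS (T : Type) i (x : T) s : drop_nth i.+1 (x :: s) = x :: drop_nth i s.
Proof. by []. Qed.

Lemma In_take (T : Type) i (s : seq T) x : List.In x (take i s) -> List.In x s.
Proof.
elim: s i => [|y s IH] [|i] //= [->|H]; by [left | right; apply: (IH i)].
Qed.

Lemma In_drop (T : Type) i (s : seq T) x : List.In x (drop i s) -> List.In x s.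
Proof.
elim: s i => [|y s IH] [|i] //= H; by [|right; apply: (IH i)].
Qed.

Lemma In_drop_nth (T : Type) i (s : seq T) x : List.In x (drop_nth i s) -> List.In x s.
Proof.
rewrite /drop_nth => H; case: (List.in_app_or _ _ _ H) => H'; [exact: In_take H' | exact: In_drop H'].
Qed.

Lemma In_nth (T : Type) (x0 : T) i (s : seq T) : (i < size s)%N -> List.In (nth x0 s i) s.
Proof.
elim: s i => [|y s IH] [|i] //= H; first by left.
by right; apply: IH.
Qed.

Lemma allDer_drop_nth i (w : seq op) : allDer w -> allDer (drop_nth i w).
Proof. by move=> H d Hd; apply: H; apply: In_drop_nth Hd. Qed.

Lemma allDer_nth i (w : seq op) : allDer w -> (i < size w)%N -> isDer (nth (fun x => x) w i).
Proof. by move=> H Hi; apply: H; apply: In_nth. Qed.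

Lemma klin_sum (f : op) (I : Type) (r : seq I) (F : I -> A) :
  klinear f -> f (\sum_(i <- r) F i) = \sum_(i <- r) f (F i).
Proof.
move=> Hf; elim: r => [|i r IH]; first by rewrite !big_nil (klin_add0 Hf).
by rewrite !big_cons Hf.1 IH.
Qed.

Lemma word_commut (w : seq op) a : allDer w ->
  ord_lt (size w).-1 (fun x => commut (word_op w) a x -
     \sum_(0 <= i < size w) nth (fun x => x) w i a * word_op (drop_nth i w) x).
Proof.
elim: w => [|e w IH] Hw.
  by move=> x /=; rewrite big_nil /commut /word_op /= subrr subr0.
have He : isDer e by apply: Hw; left.
have Hw' : allDer w by move=> d Hd; apply: Hw; right.
have {IH} := IH Hw'.
set R := (fun x => _ - _) => HR.
set W := word_op w.
have HW : forall x, W (a * x) = a * W x +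
     \sum_(0 <= i < size w) nth (fun x => x) w i a * word_op (drop_nth i w) x + R x.
  move=> x; rewrite /R /commut -/W; ring.
have -> : (fun x => commut (word_op (e :: w)) a x -
     \sum_(0 <= i < size (e :: w)) nth (fun x => x) (e :: w) i a * word_op (drop_nth i (e :: w)) x)
  = (fun x => \sum_(0 <= i < size w) e (nth (fun x => x) w i a) * word_op (drop_nth i w) x + e (R x)).
  apply: functional_extensionality => x.
  rewrite /= big_nat_recl // /commut /= -/W HW.
  case: He => [[E1 E2] Ed].
  rewrite !E1 Ed klin_sum; last by split.
  have -> : \sum_(0 <= i < size w) e (nth (fun x => x) w i a * word_op (drop_nth i w) x)
     = \sum_(0 <= i < size w) (nth (fun x => x) w i a * e (word_op (drop_nth i w) x))
       + \sum_(0 <= i < size w) (e (nth (fun x => x) w i a) * word_op (drop_nth i w) x).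
    rewrite -big_split /=; apply: eq_bigr => i _; rewrite Ed; ring.
  rewrite drop_nth_cons0 -/W.
  have -> : \sum_(0 <= i < size w)
      nth (fun x => x) (e :: w) i.+1 a * word_op (drop_nth i.+1 (e :: w)) x
     = \sum_(0 <= i < size w) (nth (fun x => x) w i a * e (word_op (drop_nth i w) x)).
    by apply: eq_bigr => i _.
  ring.
case Hs: (size w) => [|n].
  have -> : w = [::] by case: w Hs {Hw' HR HW R W Hw}.
  move=> x /=; rewrite big_nil add0r.
  rewrite Hs in HR; rewrite (HR x); exact: (klin_add0 He.1).
rewrite /= Hs /=; apply: diffop_add.
  apply: (ord_lt_sum_in (m := n.+1)) => i Hi /=.
  have Hi' : (i < size w)%N by rewrite /index_iota subn0 in Hi; rewrite Hs; exact: In_iota Hi.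
  apply: diffop_mulc; have := word_diffop (allDer_drop_nth (i:=i) Hw').
  by rewrite size_drop_nth // Hs.
by have := ord_lt_comp_der He HR; rewrite Hs.
Qed.


Definition ev (a : A) : op -> A := fun d => d a.

Fixpoint vv (Fs : seq (op -> A)) (w : seq op) : A :=
  match Fs with
  | [::] => if w is [::] then 1 else 0
  | F :: Fs' => \sum_(0 <= i < size w) F (nth (fun x => x) w i) * vv Fs' (drop_nth i w)
  end.

Definition VV (Fs : seq (op -> A)) (s : seq (term A)) : A := \sum_(t <- s) t.1 * vv Fs t.2.

Lemma comm_seq_word (l : seq A) (w : seq op) : allDer w -> size w = size l ->
  forall x, comm_seq (word_op w) l x = vv (map ev l) w * x.
Proof.
elim: l w => [|a l IH] w Hw Hs x.
  by case: w Hw Hs => // _ _; rewrite /= mul1r.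
rewrite comm_seq_cons.
set R := (fun x => commut (word_op w) a x -
     \sum_(0 <= i < size w) nth (fun x => x) w i a * word_op (drop_nth i w) x).
have HR := word_commut a Hw; rewrite -/R in HR.
pose F := (fun i x => nth (fun x => x) w i a * word_op (drop_nth i w) x).
pose S := (fun x => \sum_(0 <= i < size w) F i x).
have -> : commut (word_op w) a = (fun x => S x + R x).
  by apply: functional_extensionality => y; rewrite /R /S /F /= addrC subrK.
rewrite (comm_seq_add S R) (comm_seq_sum _ F) (comm_seq_ord HR); last by rewrite Hs.
rewrite addr0 /= big_distrl /=.
apply: eq_big_nat => i /andP [_ Hi].
rewrite comm_seq_mulc IH /ev ?mulrA //.
  exact: allDer_drop_nth.
by rewrite size_drop_nth // Hs.
Qed.

Lemma tau_eq (t : term A) s : tau (t :: s) = (fun x => t.1 * word_op t.2 x + tau s x).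
Proof. by apply: functional_extensionality => x; rewrite /tau big_cons. Qed.

Lemma tau_nil : tau [::] = (fun _ : A => 0 : A).
Proof. by apply: functional_extensionality => x; rewrite /tau big_nil. Qed.

Lemma wf_sum_cons m (t : term A) s : wf_sum m (t :: s) -> wf_term m t /\ wf_sum m s.
Proof. by move=> H; split=> [|u Hu]; apply: H; [left | right]. Qed.

Lemma comm_seq_tau m (s : seq (term A)) l : wf_sum m s -> size l = m ->
  forall x, comm_seq (tau s) l x = VV (map ev l) s * x.
Proof.
move=> Hs Hl; elim: s Hs => [|t s IH] Hs x.
  by rewrite tau_nil comm_seq_zero /VV big_nil mul0r.
case/wf_sum_cons: Hs => [[Ht1 Ht2] Hs].
rewrite tau_eq comm_seq_add comm_seq_mulc comm_seq_word //; last by rewrite Ht1.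
by rewrite IH // /VV big_cons mulrDl mulrA.
Qed.

Lemma tau_diffop m (s : seq (term A)) : wf_sum m s -> diffop m (tau s).
Proof.
elim: s => [|t s IH] Hs; first by rewrite tau_nil; apply: diffop_zero.
case/wf_sum_cons: Hs => [[Ht1 Ht2] Hs].
rewrite tau_eq; apply: diffop_add; last exact: IH.
by apply: diffop_mulc; rewrite -Ht1; apply: word_diffop.
Qed.


Lemma isDer_zero : isDer (fun _ : A => 0 : A).
Proof. split; first split=> *; rewrite ?addr0 ?scaler0 //. by move=> *; rewrite !mulr0 addr0. Qed.

Lemma isDer_add (d e : op) : isDer d -> isDer (fun x => e x) -> isDer (fun x => d x + e x).
Proof.
move=> [[D1 D2] Dd] [[E1 E2] Ed]; split; first split=> *.
- by rewrite D1 E1; ring.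
- by rewrite D2 E2 scalerDr.
by move=> x y; rewrite Dd Ed; ring.
Qed.

Lemma isDer_mulc (c : A) (d : op) : isDer d -> isDer (fun x => c * d x).
Proof.
move=> [[D1 D2] Dd]; split; first split=> *.
- by rewrite D1 mulrDr.
- by rewrite D2 scalerAr.
by move=> x y; rewrite Dd; ring.
Qed.

Lemma isDer_mulcr (c : A) (d : op) : isDer d -> isDer (fun x => d x * c).
Proof.
move=> H; have -> : (fun x => d x * c) = (fun x => c * d x).
  by apply: functional_extensionality => x; rewrite mulrC.
exact: isDer_mulc.
Qed.

Lemma isDer_sum (I : Type) (r : seq I) (F : I -> op) :
  (forall i, List.In i r -> isDer (F i)) -> isDer (fun x => \sum_(i <- r) F i x).
Proof.
elim: r => [|i r IH] H.
  have -> : (fun x : A => \sum_(i <- [::]) F i x) = (fun _ => 0).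
    by apply: functional_extensionality => x; rewrite big_nil.
  exact: isDer_zero.
have -> : (fun x : A => \sum_(j <- i :: r) F j x) = (fun x => F i x + \sum_(j <- r) F j x).
  by apply: functional_extensionality => x; rewrite big_cons.
apply: isDer_add; first by apply: H; left.
by apply: IH => j Hj; apply: H; right.
Qed.

Lemma sum_In_eq (I : Type) (r : seq I) (F G : I -> A) :
  (forall i, List.In i r -> F i = G i) -> \sum_(i <- r) F i = \sum_(i <- r) G i.
Proof.
elim: r => [|i r IH] H; first by rewrite !big_nil.
rewrite !big_cons H; last by left.
by rewrite IH // => j Hj; apply: H; right.
Qed.

Lemma In_map (T U : Type) (f : T -> U) (s : seq T) y :
  List.In y (map f s) -> exists x, List.In x s /\ y = f x.
Proof.
elim: s => [|x s IH] //= [<-|H]; first by exists x; split=> //; left.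
by have [z [Hz ->]] := IH H; exists z; split=> //; right.
Qed.

Lemma In_flatten (T : Type) (ss : seq (seq T)) y :
  List.In y (flatten ss) -> exists s, List.In s ss /\ List.In y s.
Proof.
elim: ss => [|s ss IH] //= H; case: (List.in_app_or _ _ _ H) => H'.
  by exists s; split=> //; left.
by have [z [Hz Hy]] := IH H'; exists z; split=> //; right.
Qed.

Lemma In_index_iota i m : List.In i (index_iota 0 m) -> (i < m)%N.
Proof. by rewrite /index_iota subn0 => H; have := In_iota H. Qed.

Definition dpart (F : op -> A) (s : seq (term A)) : seq (term A) :=
  flatten [seq [seq (t.1 * F (nth (fun x => x) t.2 i), drop_nth i t.2)
                 | i <- index_iota 0 (size t.2)] | t <- s].

Lemma VV_cat Fs (s1 s2 : seq (term A)) : VV Fs (s1 ++ s2) = VV Fs s1 + VV Fs s2.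
Proof. by rewrite /VV big_cat. Qed.

Lemma VV_dpart Fs F (s : seq (term A)) : VV Fs (dpart F s) = VV (F :: Fs) s.
Proof.
elim: s => [|t s IH]; first by rewrite /VV /dpart !big_nil.
rewrite /dpart /= VV_cat -/(dpart F s) IH /VV big_cons; congr (_ + _).
rewrite big_map /= big_distrr /=; apply: eq_bigr => i _; by rewrite mulrA.
Qed.

Lemma wf_dpart m F (s : seq (term A)) : wf_sum m.+1 s -> wf_sum m (dpart F s).
Proof.
move=> Hs t Ht; have [u [Hu Htu]] := In_flatten Ht.
have [t' [Ht' Eu]] := In_map Hu; subst u.
have [i [Hi Et]] := In_map Htu; subst t.
have [H1 H2] := Hs t' Ht'; have Hi' := In_index_iota Hi.
split; first by rewrite /= size_drop_nth // H1.
by move=> d Hd; apply: H2; apply: In_drop_nth Hd.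
Qed.

Notation seqt := (seq (term A)).

Lemma allDer_cat (p q : seq op) : allDer (p ++ q) <-> allDer p /\ allDer q.
Proof.
split=> [H|[Hp Hq]].
  by split=> d Hd; apply: H; apply: List.in_or_app; [left|right].
by move=> d Hd; case: (List.in_app_or _ _ _ Hd); [apply: Hp | apply: Hq].
Qed.

Lemma allDer_cons (d : op) (q : seq op) : allDer (d :: q) <-> isDer d /\ allDer q.
Proof.
split=> [H|[Hd Hq]].
  by split; [apply: H; left | move=> e He; apply: H; right].
by move=> e [<-|He]; [exact: Hd | apply: Hq].
Qed.

Lemma wf_cat m (s t : seqt) : wf_sum m (s ++ t) <-> wf_sum m s /\ wf_sum m t.
Proof.
split=> [H|[Hp Hq]].
  by split=> d Hd; apply: H; apply: List.in_or_app; [left|right].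
by move=> d Hd; case: (List.in_app_or _ _ _ Hd); [apply: Hp | apply: Hq].
Qed.

Lemma wf_cons m (x : term A) (t : seqt) : wf_sum m (x :: t) <-> wf_term m x /\ wf_sum m t.
Proof.
split=> [H|[Hd Hq]].
  by split; [apply: H; left | move=> e He; apply: H; right].
by move=> e [<-|He]; [exact: Hd | apply: Hq].
Qed.

Lemma wf_nil m : wf_sum m ([::] : seqt).
Proof. by []. Qed.

Lemma wf_flatten m (I : Type) (r : seq I) (f : I -> seqt) :
  (forall i, List.In i r -> wf_sum m (f i)) -> wf_sum m (flatten (map f r)).
Proof.
elim: r => [|i r IH] H //=; apply/wf_cat; split; first by apply: H; left.
by apply: IH => j Hj; apply: H; right.
Qed.

Lemma se_refl m (s : seqt) : sym_eq m s s.
Proof. exact: rst_refl. Qed.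

Lemma se_sym m (s t : seqt) : sym_eq m s t -> sym_eq m t s.
Proof. exact: rst_sym. Qed.

Lemma se_trans m (s t u : seqt) : sym_eq m s t -> sym_eq m t u -> sym_eq m s u.
Proof. exact: rst_trans. Qed.

Lemma se_ctx m (p q s s' : seqt) : sym_eq m s s' -> sym_eq m (p ++ s ++ q) (p ++ s' ++ q).
Proof.
elim=> [x y [p0 [q0 [r [r' [-> -> H1 H2 H3]]]]]| x | x y _ IH | x y z _ IH1 _ IH2].
- apply: rst_step; exists (p ++ p0), (q0 ++ q), r, r'; split=> //; by rewrite -!catA.
- exact: rst_refl.
- exact: rst_sym.
- exact: rst_trans IH2.
Qed.

Lemma se_cat m (s1 s2 t1 t2 : seqt) : sym_eq m s1 t1 -> sym_eq m s2 t2 -> sym_eq m (s1 ++ s2) (t1 ++ t2).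
Proof.
move=> H1 H2; apply: se_trans (_ : sym_eq m (t1 ++ s2) _).
  by have := se_ctx [::] s2 H1; rewrite /=.
by have := se_ctx t1 [::] H2; rewrite !cats0.
Qed.

Lemma se_basic m (r r' : seqt) : wf_sum m r -> wf_sum m r' -> sym_basic r r' -> sym_eq m r r'.
Proof. move=> H1 H2 H3; apply: rst_step; exists [::], [::], r, r'; by rewrite /= !cats0. Qed.

Lemma se_flatten m (I : Type) (r : seq I) (f g : I -> seqt) :
  (forall i, List.In i r -> sym_eq m (f i) (g i)) -> sym_eq m (flatten (map f r)) (flatten (map g r)).
Proof.
elim: r => [|i r IH] H /=; first exact: se_refl.
apply: se_cat; first by apply: H; left.
by apply: IH => j Hj; apply: H; right.
Qed.

Lemma se_flatten0 m (I : Type) (r : seq I) (f : I -> seqt) :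
  (forall i, List.In i r -> sym_eq m (f i) [::]) -> sym_eq m (flatten (map f r)) [::].
Proof.
elim: r => [|i r IH] H /=; first exact: se_refl.
have := se_cat (H i (or_introl erefl)) (IH (fun j Hj => H j (or_intror Hj))); by [].
Qed.

Lemma se_move1 m (x : term A) (t : seqt) : wf_term m x -> wf_sum m t -> sym_eq m (x :: t) (t ++ [:: x]).
Proof.
move=> Hx; elim: t => [|y t IH] Ht /=; first exact: se_refl.
case/wf_cons: Ht => Hy Ht.
apply: se_trans (_ : sym_eq m (y :: x :: t) _).
  have := @se_ctx m [::] t [:: x; y] [:: y; x]; apply.
  by apply: se_basic; [move=> u [<-|[<-|[]]] | move=> u [<-|[<-|[]]] | constructor].
by have := @se_ctx m [:: y] [::] _ _ (IH Ht); rewrite /= !cats0.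
Qed.

Lemma se_catC m (s t : seqt) : wf_sum m s -> wf_sum m t -> sym_eq m (s ++ t) (t ++ s).
Proof.
elim: s => [|x s IH] Hs Ht /=; first by rewrite cats0; exact: se_refl.
case/wf_cons: Hs => Hx Hs.
apply: se_trans (_ : sym_eq m (x :: t ++ s) _).
  by have := @se_ctx m [:: x] [::] _ _ (IH Hs Ht); rewrite /= !cats0.
have := @se_ctx m [::] s _ _ (se_move1 Hx Ht); by rewrite /= -catA.
Qed.

Lemma se_interleave m (I : Type) (r : seq I) (f g : I -> seqt) :
  (forall i, List.In i r -> wf_sum m (f i) /\ wf_sum m (g i)) ->
  sym_eq m (flatten (map f r) ++ flatten (map g r)) (flatten [seq f i ++ g i | i <- r]).
Proof.
elim: r => [|i r IH] H /=; first exact: se_refl.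
have [Hf Hg] := H i (or_introl erefl).
have H' : forall j, List.In j r -> wf_sum m (f j) /\ wf_sum m (g j) by move=> j Hj; apply: H; right.
have Wf : wf_sum m (flatten (map f r)) by apply: wf_flatten => j Hj; case: (H' j Hj).
have Wg : wf_sum m (flatten (map g r)) by apply: wf_flatten => j Hj; case: (H' j Hj).
rewrite -!catA; apply: se_trans (_ : sym_eq m (f i ++ (g i ++ flatten (map f r)) ++ flatten (map g r)) _).
  by have := se_ctx (f i) (flatten (map g r)) (se_catC Wf Hg); rewrite -!catA.
have H2 := se_ctx (f i ++ g i) [::] (IH H'); rewrite -!catA cats0 in H2; rewrite /= -!catA.
by rewrite cats0 in H2.
Qed.

Lemma se_transpose m (I J : Type) (ri : seq I) (rj : seq J) (f : I -> J -> seqt) :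
  (forall i j, List.In i ri -> List.In j rj -> wf_sum m (f i j)) ->
  sym_eq m (flatten [seq flatten [seq f i j | j <- rj] | i <- ri])
           (flatten [seq flatten [seq f i j | i <- ri] | j <- rj]).
Proof.
elim: ri => [|i ri IH] H /=.
  by elim: rj {H} => [|j rj IH] /=; [exact: se_refl | ].
apply: se_trans (_ : sym_eq m (flatten [seq f i j | j <- rj] ++
     flatten [seq flatten [seq f i0 j | i0 <- ri] | j <- rj]) _).
  have H2 := se_ctx (flatten [seq f i j | j <- rj]) [::] (IH (fun i0 j Hi Hj => H i0 j (or_intror Hi) Hj)).
  by rewrite !cats0 in H2.
apply: (se_interleave (f := fun j => f i j) (g := fun j => flatten [seq f i0 j | i0 <- ri])).
move=> j Hj; split; first by apply: H => //; left.
by apply: wf_flatten => i0 Hi0; apply: H => //; right.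
Qed.

Lemma se_merge m (I : Type) (r : seq I) (c : I -> A) (w : seq op) : size w = m -> allDer w ->
  sym_eq m [seq (c i, w) | i <- r] [:: (\sum_(i <- r) c i, w)].
Proof.
move=> Hs Hd; elim: r => [|i r IH] /=.
  rewrite big_nil; apply: se_sym; apply: se_basic => //; last exact: sb_zero.
  by move=> t [<-|[]].
apply: se_trans (_ : sym_eq m [:: (c i, w); (\sum_(j <- r) c j, w)] _).
  by have H2 := se_ctx [:: (c i, w)] [::] IH; rewrite !cats0 in H2.
rewrite big_cons; apply: se_basic; last exact: sb_merge.
  by move=> t [<-|[<-|[]]].
by move=> t [<-|[]].
Qed.

Lemma allDer_swap (p q : seq op) a b : allDer (p ++ a :: b :: q) -> allDer (p ++ b :: a :: q).
Proof.
move=> /allDer_cat [Hp /allDer_cons [Ha /allDer_cons [Hb Hq]]].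
apply/allDer_cat; split=> //; apply/allDer_cons; split=> //; apply/allDer_cons; split=> //.
Qed.

Lemma se_move m (c : A) (p u v : seq op) (e : op) : size (p ++ e :: u ++ v) = m -> allDer (p ++ e :: u ++ v) ->
  sym_eq m [:: (c, p ++ e :: u ++ v)] [:: (c, p ++ u ++ e :: v)].
Proof.
elim: u p => [|x u IH] p Hs Hd /=; first exact: se_refl.
have Hd' : allDer (p ++ x :: e :: u ++ v) by apply: allDer_swap.
have Hs' : size (p ++ x :: e :: u ++ v) = m by rewrite -Hs !size_cat.
apply: se_trans (_ : sym_eq m [:: (c, (p ++ [:: x]) ++ e :: u ++ v)] _).
  rewrite -catA /=; apply: se_basic; last exact: sb_sym.
    by move=> t [<-|[]].
  by move=> t [<-|[]].
have := IH (p ++ [:: x]); rewrite -!catA /=; apply => //.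
Qed.

Definition mulsc (d : op) (b : A) (s : seqt) : seqt := [seq (b * t.1, d :: t.2) | t <- s].

Lemma mulsc_cat d b (s t : seqt) : mulsc d b (s ++ t) = mulsc d b s ++ mulsc d b t.
Proof. exact: map_cat. Qed.

Lemma wf_mulsc m d b (s : seqt) : isDer d -> wf_sum m s -> wf_sum m.+1 (mulsc d b s).
Proof.
move=> Hd Hs t Ht; have [u [Hu ->]] := In_map Ht; have [H1 H2] := Hs u Hu.
by split; [rewrite /= H1 | apply/allDer_cons].
Qed.

Lemma se_mulsc m d b (s t : seqt) : isDer d -> sym_eq m s t -> sym_eq m.+1 (mulsc d b s) (mulsc d b t).
Proof.
move=> Hd; elim=> [x y [p0 [q0 [r [r' [-> -> H1 H2 H3]]]]]| x | x y _ IH | x y z _ IH1 _ IH2].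
- apply: rst_step; exists (mulsc d b p0), (mulsc d b q0), (mulsc d b r), (mulsc d b r').
  rewrite !mulsc_cat; split=> //; try exact: wf_mulsc.
  case: H3 => /=.
  + by move=> *; constructor.
  + by move=> a c w; rewrite mulrDr; constructor.
  + by move=> w; rewrite mulr0; constructor.
  + by move=> a u v d1 d2 He; exact: (sb_ext (b * a) (d :: u) v He).
  + by move=> a u v d1 d2; exact: (sb_add (b * a) (d :: u) v d1 d2).
  + by move=> a c u v d1; rewrite mulrA; exact: (sb_scale (b * a) c (d :: u) v d1).
  + by move=> a u v d1 d2; exact: (sb_sym (b * a) (d :: u) v d1 d2).
- exact: rst_refl.
- exact: rst_sym.
- exact: rst_trans IH2.
Qed.


Lemma vv_cons (Fs : seq (op -> A)) (d : op) (w : seq op) :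
  vv Fs (d :: w) = \sum_(0 <= p < size Fs) nth (fun _ => 0) Fs p d * vv (drop_nth p Fs) w.
Proof.
elim: Fs w => [|F Fs IH] w; first by rewrite big_geq.
rewrite [LHS]/= [size (F :: Fs)]/= !big_nat_recl // !drop_nth_cons0 /=; congr (_ + _).
have -> : \sum_(0 <= i < size w) F (nth (fun x => x) w i) * vv Fs (drop_nth i.+1 (d :: w)) =
   \sum_(0 <= i < size w) \sum_(0 <= p < size Fs)
       F (nth (fun x => x) w i) * (nth (fun _ => 0) Fs p d * vv (drop_nth p Fs) (drop_nth i w)).
  by apply: eq_bigr => i _; rewrite drop_nth_consS IH big_distrr.
rewrite exchange_big /=; apply: eq_bigr => p _; rewrite big_distrr /=.
by apply: eq_bigr => i _; rewrite mulrCA.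
Qed.

Lemma VV_flatten Fs (I : Type) (r : seq I) (f : I -> seqt) :
  VV Fs (flatten (map f r)) = \sum_(i <- r) VV Fs (f i).
Proof.
elim: r => [|i r IH]; first by rewrite big_nil /VV big_nil.
by rewrite /= VV_cat IH big_cons.
Qed.

Lemma VV_mulsc Fs d b (x : seqt) :
  VV Fs (mulsc d b x) = b * \sum_(0 <= p < size Fs) nth (fun _ => 0) Fs p d * VV (drop_nth p Fs) x.
Proof.
rewrite /VV /mulsc big_map.
have -> : \sum_(t <- x) (b * t.1) * vv Fs (d :: t.2) =
  \sum_(t <- x) \sum_(0 <= p < size Fs) b * (nth (fun _ => 0) Fs p d * (t.1 * vv (drop_nth p Fs) t.2)).
  apply: eq_bigr => t _; rewrite vv_cons big_distrr; apply: eq_bigr => p _ /=; ring.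
rewrite exchange_big big_distrr; apply: eq_bigr => p _ /=.
by rewrite big_distrr /= big_distrr.
Qed.

Lemma drop_nth_map (T U : Type) (f : T -> U) p (s : seq T) :
  drop_nth p (map f s) = map f (drop_nth p s).
Proof. by rewrite /drop_nth map_cat map_take map_drop. Qed.

Definition FormP m (Phi : seq A -> A) :=
  (forall l p, (p < size l)%N -> Phi (nth 0 l p :: drop_nth p l) = Phi l) /\
  ((0 < m)%N -> forall l, size l = m.-1 -> isDer (fun a => Phi (a :: l))).

Lemma form_swap m Phi : FormP m Phi -> forall a b l, Phi (a :: b :: l) = Phi (b :: a :: l).
Proof. move=> [H _] a b l; have := H (b :: a :: l) 1%N erefl; by rewrite /drop_nth /= drop0. Qed.

Section Dual.
Variables (n : nat) (ds : 'I_n -> op) (phis : 'I_n -> op -> A).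
Hypothesis Hds : forall j, isDer (ds j).
Hypothesis Hlin : forall j (a : A) d e, isDer d -> isDer e ->
  phis j (fun x => a * d x + e x) = a * phis j d + phis j e.
Hypothesis Hdual : forall d, isDer d -> forall x, d x = \sum_(j < n) phis j d * ds j x.

Lemma phis_zero j : phis j (fun _ => 0) = 0.
Proof.
have := Hlin j 1 isDer_zero isDer_zero.
have -> : (fun x : A => 1 * (fun _ : A => 0 : A) x + (fun _ => 0) x) = (fun _ => 0).
  by apply: functional_extensionality => x; rewrite mulr0 addr0.
rewrite mul1r => h.
have : phis j (fun _ => 0) - phis j (fun _ => 0) =
  phis j (fun _ => 0) + phis j (fun _ => 0) - phis j (fun _ => 0) by rewrite -h.
by rewrite subrr addrK.
Qed.

Lemma phis_add j (d e : op) : isDer d -> isDer e -> phis j (fun x => d x + e x) = phis j d + phis j e.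
Proof.
move=> Hd He; have := Hlin j 1 Hd He; rewrite mul1r => <-.
by congr (phis j _); apply: functional_extensionality => x; rewrite mul1r.
Qed.

Lemma phis_mulc j c (d : op) : isDer d -> phis j (fun x => c * d x) = c * phis j d.
Proof.
move=> Hd; have := Hlin j c Hd isDer_zero; rewrite phis_zero addr0 => <-.
by congr (phis j _); apply: functional_extensionality => x; rewrite addr0.
Qed.

Lemma phis_sum j (I : Type) (r : seq I) (F : I -> op) :
  (forall i, List.In i r -> isDer (F i)) ->
  phis j (fun x => \sum_(i <- r) F i x) = \sum_(i <- r) phis j (F i).
Proof.
elim: r => [|i r IH] H.
  have -> : (fun x : A => \sum_(i <- [::]) F i x) = (fun _ => 0).
    by apply: functional_extensionality => x; rewrite big_nil.
  by rewrite phis_zero big_nil.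
have -> : (fun x : A => \sum_(j <- i :: r) F j x) = (fun x => F i x + \sum_(j <- r) F j x).
  by apply: functional_extensionality => x; rewrite big_cons.
rewrite phis_add ?big_cons ?IH //; first by move=> l Hl; apply: H; right.
- by apply: H; left.
by apply: isDer_sum => l Hl; apply: H; right.
Qed.

Lemma phis_mulcr j c (d : op) : isDer d -> phis j (fun x => d x * c) = phis j d * c.
Proof.
move=> Hd; have -> : (fun x => d x * c) = (fun x => c * d x).
  by apply: functional_extensionality => x; rewrite mulrC.
by rewrite phis_mulc // mulrC.
Qed.

Definition allDerS (s : seq (term A)) := forall t, List.In t s -> allDer t.2.

Lemma VV_ev_eq Fs (s : seq (term A)) :
  (fun a => VV (ev a :: Fs) s) =
  (fun a => \sum_(t <- s) (fun t a => t.1 * \sum_(0 <= i < size t.2)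
       (fun i a => nth (fun x => x) t.2 i a * vv Fs (drop_nth i t.2)) i a) t a).
Proof. by []. Qed.

Lemma VV_sub j Fs (s : seq (term A)) : allDerS s ->
  phis j (fun a => VV (ev a :: Fs) s) = VV (phis j :: Fs) s.
Proof.
move=> Hs; rewrite VV_ev_eq phis_sum; last first.
  move=> t Ht; apply: isDer_mulc; apply: isDer_sum => i Hi.
  by apply: isDer_mulcr; apply: allDer_nth; [apply: Hs | apply: In_index_iota].
rewrite /VV; apply: sum_In_eq => t Ht.
have Hi : forall i, List.In i (index_iota 0 (size t.2)) ->
  isDer (fun a => nth (fun x => x) t.2 i a * vv Fs (drop_nth i t.2)).
  by move=> i Hi; apply: isDer_mulcr; apply: allDer_nth; [apply: Hs | apply: In_index_iota].
rewrite /= phis_mulc; last exact: isDer_sum.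
rewrite phis_sum //; congr (_ * _); apply: sum_In_eq => i Hi'.
rewrite phis_mulcr //; apply: allDer_nth; [apply: Hs | apply: In_index_iota]; eassumption.
Qed.

Lemma keyZ m : forall s, wf_sum m s -> (forall l, size l = m -> VV (map ev l) s = 0) ->
  forall js : seq 'I_n, size js = m -> VV (map phis js) s = 0.
Proof.
elim: m => [|m IH] s Hs H js Hjs.
  by case: js Hjs => // _; apply: (H [::]).
case: js Hjs => // j js [Hjs].
rewrite /= -VV_dpart; apply: (IH _ (wf_dpart (F:=phis j) Hs)) => // l Hl.
rewrite VV_dpart -VV_sub; last by move=> t Ht; case: (Hs t Ht).
have -> : (fun a => VV (ev a :: map ev l) s) = (fun _ => 0).
  by apply: functional_extensionality => a; apply: (H (a :: l)); rewrite /= Hl.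
exact: phis_zero.
Qed.

Lemma se_split (js : seq 'I_n) (c : A) (f : 'I_n -> A) (v : seq op) : allDer v ->
  sym_eq (size v).+1 [:: (c, (fun x => \sum_(j <- js) f j * ds j x) :: v)]
                     [seq (c * f j, ds j :: v) | j <- js].
Proof.
move=> Hv; elim: js => [|j js IH] /=.
  have -> : (fun x : A => \sum_(j <- [::]) f j * ds j x) = (fun x => 0 * (fun _ : A => 0 : A) x).
    by apply: functional_extensionality => x; rewrite big_nil mul0r.
  apply: se_trans (_ : sym_eq _ [:: (c * 0, (fun _ : A => 0 : A) :: v)] _).
    apply: se_basic; last exact: (sb_scale c 0 [::] v (fun _ : A => 0 : A)).
      move=> t [<-|[]]; split=> //; apply/allDer_cons; split=> //.
      by apply: isDer_mulc; apply: isDer_zero.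
    move=> t [<-|[]]; split=> //; apply/allDer_cons; split=> //; exact: isDer_zero.
  rewrite mulr0; apply: se_basic; last exact: sb_zero.
    move=> t [<-|[]]; split=> //; apply/allDer_cons; split=> //; exact: isDer_zero.
  by [].
have Hsum : forall (r : seq 'I_n), isDer (fun x => \sum_(j <- r) f j * ds j x).
  by move=> r; apply: isDer_sum => i _; apply: isDer_mulc.
have -> : (fun x : A => \sum_(j0 <- j :: js) f j0 * ds j0 x) =
   (fun x => (fun y => f j * ds j y) x + (fun y => \sum_(j0 <- js) f j0 * ds j0 y) x).
  by apply: functional_extensionality => x; rewrite big_cons.
apply: se_trans (_ : sym_eq _ [:: (c, (fun y => f j * ds j y) :: v);
                                (c, (fun y => \sum_(j0 <- js) f j0 * ds j0 y) :: v)] _).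
  apply: se_basic; last exact: (sb_add c [::] v (fun y => f j * ds j y) (fun y => \sum_(j0 <- js) f j0 * ds j0 y)).
    move=> t [<-|[]]; split=> //; apply/allDer_cons; split=> //.
    by apply: isDer_add; [apply: isDer_mulc | apply: Hsum].
  by move=> t [<-|[<-|[]]]; split=> //; apply/allDer_cons; split=> //; (exact: isDer_mulc || exact: Hsum).
have H1 : sym_eq (size v).+1 [:: (c, (fun y => f j * ds j y) :: v)] [:: (c * f j, ds j :: v)].
  apply: se_basic; last exact: (sb_scale c (f j) [::] v (ds j)).
    move=> t [<-|[]]; split=> //; apply/allDer_cons; split=> //; exact: isDer_mulc.
  move=> t [<-|[]]; split=> //; apply/allDer_cons; split=> //.
exact: (se_cat H1 IH).
Qed.

Lemma se_expand (c : A) (e : op) (v : seq op) : isDer e -> allDer v ->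
  sym_eq (size v).+1 [:: (c, e :: v)] [seq (c * phis j e, ds j :: v) | j <- index_enum 'I_n].
Proof.
move=> He Hv; apply: se_trans (se_split (index_enum 'I_n) c (fun j => phis j e) Hv).
apply: se_basic; last first.
  by apply: (sb_ext c [::] v); apply: Hdual.
  move=> t [<-|[]]; split=> //; apply/allDer_cons; split=> //.
  by apply: isDer_sum => i _; apply: isDer_mulc.
move=> t [<-|[]]; split=> //; apply/allDer_cons; split=> //.
Qed.

Lemma euler_term m (b c : A) (w : seq op) : b * (m.+1)%:R = 1 -> size w = m.+1 -> allDer w ->
  sym_eq m.+1 [:: (c, w)]
    (flatten [seq flatten [seq [:: (b * (c * phis j (nth (fun x => x) w i)), ds j :: drop_nth i w)]
                  | j <- index_enum 'I_n] | i <- index_iota 0 (size w)]).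
Proof.
move=> Hb Hs Hw.
have -> : [:: (c, w)] = [:: (\sum_(i <- index_iota 0 (size w)) (fun _ => b * c) i, w)].
  by rewrite sumr_const_nat subn0 Hs -mulr_natr mulrAC Hb mul1r.
have H0 := se_sym (se_merge (index_iota 0 (size w)) (fun _ => b * c) Hs Hw). apply: (se_trans H0).
rewrite -flatten_map1; apply: se_flatten => i Hi.
have Hi' := In_index_iota Hi.
rewrite flatten_map1.
have Hsd : size (drop_nth i w) = m by rewrite size_drop_nth // Hs.
apply: se_trans (_ : sym_eq _ [:: (b * c, nth (fun x => x) w i :: drop_nth i w)] _).
  have E : w = take i w ++ nth (fun x => x) w i :: drop i.+1 w.
    by rewrite -seq.drop_nth // cat_take_drop.
  have := @se_move m.+1 (b * c) [::] (take i w) (drop i.+1 w) (nth (fun x => x) w i).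
  rewrite /= -E /drop_nth => H; apply: se_sym; apply: H => //.
  - by rewrite size_cat size_take Hi' size_drop /= -Hs; lia.
  - apply/allDer_cons; split; first exact: allDer_nth.
    exact: (allDer_drop_nth (i := i)).
have := @se_expand (b * c) (nth (fun x => x) w i) (drop_nth i w) (allDer_nth Hw Hi') (allDer_drop_nth Hw).
rewrite Hsd; set L := map _ _; set L' := map _ _; have -> // : L = L'.
by apply: eq_map => j; rewrite mulrA.
Qed.

Lemma mulsc_dpart j b (s : seqt) :
  mulsc (ds j) b (dpart (phis j) s) =
  flatten [seq flatten [seq [:: (b * (t.1 * phis j (nth (fun x => x) t.2 i)), ds j :: drop_nth i t.2)]
             | i <- index_iota 0 (size t.2)] | t <- s].
Proof.
elim: s => [|t s IH] //=.
by rewrite mulsc_cat -/(dpart (phis j) s) IH flatten_map1 /mulsc -map_comp.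
Qed.

Lemma euler m (b : A) (s : seqt) : b * (m.+1)%:R = 1 -> wf_sum m.+1 s ->
  sym_eq m.+1 s (flatten [seq mulsc (ds j) b (dpart (phis j) s) | j <- index_enum 'I_n]).
Proof.
move=> Hb Hs.
pose X := fun (j : 'I_n) (t : term A) i =>
  [:: (b * (t.1 * phis j (nth (fun x => x) t.2 i)), ds j :: drop_nth i t.2)].
have -> : flatten [seq mulsc (ds j) b (dpart (phis j) s) | j <- index_enum 'I_n] =
  flatten [seq flatten [seq flatten [seq X j t i | i <- index_iota 0 (size t.2)] | t <- s]
          | j <- index_enum 'I_n].
  by congr flatten; apply: eq_map => j; rewrite mulsc_dpart.
have wfX : forall j t i, List.In t s -> List.In i (index_iota 0 (size t.2)) -> wf_sum m.+1 (X j t i).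
  move=> j t i Ht Hi; have [H1 H2] := Hs t Ht; have Hi' := In_index_iota Hi.
  move=> u [<-|[]]; split; first by rewrite /= size_drop_nth // H1.
  by apply/allDer_cons; split; [apply: Hds | apply: allDer_drop_nth].
pose Y := (flatten [seq flatten [seq flatten [seq X j t i
                    | i <- index_iota 0 (size t.2)] | j <- index_enum 'I_n] | t <- s]).
apply: (@se_trans m.+1 s Y); last first.
  apply: (se_transpose (f := fun t j => flatten [seq X j t i | i <- index_iota 0 (size t.2)])).
  by move=> t j Ht _; apply: wf_flatten => i Hi; apply: wfX.
have {1}-> : s = flatten [seq [:: t] | t <- s] by rewrite flatten_seq1.
apply: se_flatten => -[c w] Ht; have [/= H1 H2] := Hs _ Ht.
apply: se_trans (euler_term c Hb H1 H2) _.
apply: (se_transpose (f := fun i j => X j (c, w) i)).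
by move=> i j Hi _; apply: wfX.
Qed.

Lemma wf0_map (s : seqt) : wf_sum 0 s -> s = [seq (t.1, [::]) | t <- s].
Proof.
elim: s => [|[c w] s IH] //= /wf_cons [[H1 _] Hs].
by case: w H1 => // _; rewrite -IH.
Qed.

Hypothesis HQ : contains_Q A.

Lemma inj_main m : forall s, wf_sum m s -> (forall js, size js = m -> VV (map phis js) s = 0) ->
  sym_eq m s [::].
Proof.
elim: m => [|m IH] s Hs H.
  have E := wf0_map Hs.
  have := H [::] erefl; rewrite /VV.
  have -> : \sum_(t <- s) t.1 * vv [seq phis i | i <- [::]] t.2 = \sum_(t <- s) t.1.
    by apply: sum_In_eq => t Ht; have [H1 _] := Hs t Ht; case: t.2 H1 => // _; rewrite mulr1.
  move=> H0; rewrite E; apply: se_trans (se_merge _ _ (w := [::]) erefl (fun d (H : List.In d [::]) => match H with end)) _.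
  rewrite H0; apply: se_basic => //; last exact: sb_zero.
  by move=> t [<-|[]].
have [b Hb] := HQ m.
apply: se_trans (euler Hb Hs) _.
apply: se_flatten0 => j _.
have := se_mulsc b (Hds j) (IH (dpart (phis j) s) (wf_dpart Hs) _); apply.
move=> js Hjs; rewrite VV_dpart; apply: (H (j :: js)); by rewrite /= Hjs.
Qed.

Lemma formP_Phij m Phi j : FormP m.+1 Phi -> FormP m (fun l => phis j (fun a => Phi (a :: l))).
Proof.
move=> HF; have Hsw := form_swap HF; case: HF => [Hs Hd]; split.
  move=> l p Hp; congr (phis j _); apply: functional_extensionality => a.
  by rewrite Hsw; have := Hs (a :: l) p.+1 Hp.
move=> Hm l Hl.
have HGa : forall c, isDer (fun a => Phi (a :: c :: l)).
  by move=> c; apply: Hd => //=; rewrite Hl; case: m Hm {Hl}.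
have HGc : forall a, isDer (fun c => Phi (a :: c :: l)).
  move=> a; have -> : (fun c => Phi (a :: c :: l)) = (fun c => Phi (c :: a :: l)).
    by apply: functional_extensionality => c; rewrite Hsw.
  by apply: Hd => //=; rewrite Hl; case: m Hm {Hl HGa}.
split; first split.
- move=> x y.
  have -> : (fun a => Phi (a :: (x + y) :: l)) = (fun a => Phi (a :: x :: l) + Phi (a :: y :: l)).
    by apply: functional_extensionality => a; rewrite (HGc a).1.1.
  exact: phis_add.
- move=> r x.
  have -> : (fun a => Phi (a :: (r *: x) :: l)) = (fun a => (r *: 1) * Phi (a :: x :: l)).
    by apply: functional_extensionality => a; rewrite (HGc a).1.2 -scalerAl mul1r.
  by rewrite phis_mulc // -scalerAl mul1r.
- move=> x y.
  have -> : (fun a => Phi (a :: (x * y) :: l)) =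
            (fun a => (fun a => x * Phi (a :: y :: l)) a + (fun a => y * Phi (a :: x :: l)) a).
    by apply: functional_extensionality => a; rewrite (HGc a).2.
  by rewrite phis_add ?phis_mulc //; apply: isDer_mulc.
Qed.

Lemma rep m : forall Phi, FormP m Phi ->
  exists s, wf_sum m s /\ forall l, size l = m -> VV (map ev l) s = Phi l.
Proof.
elim: m => [|m IH] Phi HF.
  exists [:: (Phi [::], [::])]; split; first by move=> t [<-|[]].
  by case=> // _; rewrite /VV big_cons big_nil /= mulr1 addr0.
have [b Hb] := HQ m.
have Hj : forall j, {s | wf_sum m s /\ forall l, size l = m ->
                          VV (map ev l) s = phis j (fun a => Phi (a :: l))}.
  by move=> j; apply: constructive_indefinite_description; apply: IH; apply: formP_Phij.
exists (flatten [seq mulsc (ds j) b (sval (Hj j)) | j <- index_enum 'I_n]); split.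
  apply: wf_flatten => j _; apply: wf_mulsc => //; exact: (proj1 (svalP (Hj j))).
move=> l Hl; rewrite VV_flatten.
have E : forall j, VV (map ev l) (mulsc (ds j) b (sval (Hj j))) =
   b * \sum_(0 <= p < size l) phis j (fun a => Phi (a :: drop_nth p l)) * ds j (nth 0 l p).
  move=> j; rewrite VV_mulsc size_map; congr (_ * _); apply: eq_big_nat => p /andP [_ Hp].
  rewrite (nth_map 0) // drop_nth_map (proj2 (svalP (Hj j))) /ev; first by rewrite mulrC.
  by rewrite size_drop_nth // Hl.
rewrite (eq_bigr _ (fun j _ => E j)) -big_distrr exchange_big /=.
have -> : \sum_(0 <= p < size l) \sum_(j <- index_enum 'I_n)
     phis j (fun a => Phi (a :: drop_nth p l)) * ds j (nth 0 l p) = \sum_(0 <= p < size l) Phi l.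
  apply: eq_big_nat => p /andP [_ Hp].
  rewrite -(Hdual _ (nth 0 l p)); first exact: HF.1.
  by apply: HF.2 => //; rewrite size_drop_nth // Hl.
by rewrite sumr_const_nat subn0 Hl -mulr_natr mulrCA Hb mulr1.
Qed.

End Dual.



Lemma comm_seq_swap (f : op) u a b v : comm_seq f (u ++ a :: b :: v) = comm_seq f (u ++ b :: a :: v).
Proof.
rewrite /comm_seq !foldl_cat /=.
have -> : commut (commut (foldl (fun g a => commut g a) f u) a) b =
          commut (commut (foldl (fun g a => commut g a) f u) b) a.
  by apply: functional_extensionality => x; rewrite /commut (mulrCA b a x); ring.
by [].
Qed.

Lemma comm_seq_move (f : op) p x u v : comm_seq f (p ++ x :: u ++ v) = comm_seq f (p ++ u ++ x :: v).
Proof.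
elim: u p => [|y u IH] p //=.
by rewrite comm_seq_swap -[p ++ y :: _]/(p ++ [:: y] ++ _) catA IH -catA.
Qed.

Lemma comm_diffop m n (f : op) l : diffop (m + n) f -> size l = m -> diffop n (comm_seq f l).
Proof.
elim: l m f => [|a l IH] m f Hf Hl; first by move: Hf; rewrite -Hl.
case: m Hf Hl => // m Hf [Hl]; rewrite comm_seq_cons.
by apply: (IH m) => //; rewrite addSn in Hf; apply: Hf.2.
Qed.

Lemma diffop0_val (g : op) : diffop 0 g -> forall x, g x = g 1 * x.
Proof. by move=> [c Hc] x; rewrite !Hc mulr1. Qed.

Lemma der_of_diffop1 (psi : op) : diffop 1 psi -> isDer (fun a => commut psi a 1).
Proof.
move=> [[P1 P2] H]; split; first split.
- by move=> x y; rewrite /commut !mulr1 P1; ring.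
- by move=> c x; rewrite /commut !mulr1 P2 -scalerAl scalerBr.
move=> x y.
have Hx := diffop0_val (H x) y; rewrite /commut mulr1 in Hx.
rewrite /commut !mulr1.
have -> : psi (x * y) = x * psi y + (psi x - x * psi 1) * y by rewrite -Hx; ring.
ring.
Qed.

Lemma formP_comm m (phi : op) : diffop m phi -> FormP m (fun l => comm_seq phi l 1).
Proof.
move=> Hphi; split.
  move=> l p Hp /=.
  have E : l = take p l ++ nth 0 l p :: drop p.+1 l by rewrite -seq.drop_nth // cat_take_drop.
  by rewrite {3}E -(comm_seq_move phi [::]).
move=> Hm l Hl.
have -> : (fun a => comm_seq phi (a :: l) 1) = (fun a => commut (comm_seq phi l) a 1).
  apply: functional_extensionality => a.
  have := comm_seq_move phi [::] a l [::]; rewrite /= cats0 => ->.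
  by rewrite /comm_seq foldl_cat.
apply: der_of_diffop1; apply: (comm_diffop (m := m.-1)) => //.
by rewrite addn1 prednK.
Qed.

End Ops.

Theorem mainTheorem17 (k : comNzRingType) (A : comAlgType k) :
  contains_Q A -> Der_fg_projective A ->
  forall i : nat,
    (* surjectivity of tau in degree i: Sym^i Der -> Diff_i / Diff_(i-1) *)
    (forall phi : A -> A, diffop i phi ->
       exists s : seq (term A), wf_sum i s /\
         ord_lt i (fun x => phi x - tau s x)) /\
    (* injectivity of tau in degree i *)
    (forall s : seq (term A), wf_sum i s -> ord_lt i (tau s) -> sym_eq i s [::]).
Proof.
move=> HQ [n [ds [phis [Hds _ Hlin Hdual]]]] i; split.
- move=> phi Hphi.
  have [s [Hs Hv]] := rep Hds Hlin Hdual HQ (formP_comm Hphi).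
  exists s; split => //.
  apply: drop_ord; first exact: (diffop_sub Hphi (tau_diffop Hs)).
  move=> l Hl x; rewrite comm_seq_sub (comm_seq_tau Hs Hl) Hv //.
  have Hd0 : diffop 0 (comm_seq phi l) by apply: (comm_diffop (m := i)); rewrite ?addn0.
  by rewrite (diffop0_val Hd0 x) subrr.
- move=> s Hs Ht; apply: (inj_main Hds Hdual HQ Hs) => js Hjs.
  apply: (keyZ Hlin Hs) => // l Hl.
  have H0 := comm_seq_ord Ht Hl 1.
  by rewrite (comm_seq_tau Hs Hl) mulr1 in H0.
Qed.
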